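(* Let $[\alpha]_{A,C}\psi$ be a well-formed ac-box and let $\beta$ be a program such that $\alpha\parallel\beta$ is a program with recorder $h$, where $\beta$ does not interfere with $[\alpha\parallel\_\,]_{A,C}\psi$, i.e. for all $\chi\in\{A,C,\psi\}$: $FV(\chi)\cap BV(\beta)\subseteq\{\mu,\mu',h\}$ and $CN_{\{h\}}(\chi)\cap CN(\beta)\subseteq CN(\alpha)$. Let $(v,\tau\downarrow\alpha,w_\alpha)\in[\![\alpha]\!]$ and $(v,\tau\downarrow\beta,w_\beta)\in[\![\beta]\!]$ with $w=w_\alpha\bowtie w_\beta$, with $w=w_\alpha=w_\beta$ on $\{\mu,\mu'\}$ if $w\ne\bot$, and with $\tau\downarrow(\alpha\parallel\beta)=\tau$ (so $(v,\tau,w)\in[\![\alpha\parallel\beta]\!]$). Then for $\lambda\in\{A,C\}$: (1) $v\cdot(\tau\downarrow\alpha)\models\lambda$ iff $v\cdot\tau\models\lambda$; (2) if $w\ne\bot$, then $w_\alpha\cdot(\tau\downarrow\alpha)\models\psi$ iff $w\cdot\tau\models\psi$.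
   Context: Logic $\mathsf{dL}_{\mathsf{CHP}}$. Real variables (with differential variables $x'$), trace variables, channels $\mathbb N$; $\mu,\mu'$ are the global time variables. Terms: real terms $x\mid r\in\mathbb Q\mid e_1+e_2\mid e_1\cdot e_2\mid(p)'\mid\mathrm{ch}(te)\mid\mathrm{val}(te)\mid\mathrm{time}(te)\mid|te|$ and trace terms $h\mid\epsilon\mid\langle ch,p_1,p_2\rangle\mid te_1\cdot te_2\mid te\downarrow Y\mid te[e]$ ($p$ polynomials with rational coefficients, $Y$ finite or cofinite channel set). Programs: $x:=p\mid x:=*\mid ?\chi\mid x'=p\,\&\,\chi\mid\alpha;\beta\mid\alpha\cup\beta\mid\alpha^*\mid ch(h)!p\mid ch(h)?x\mid\alpha\parallel\beta$ with, in $\alpha\parallel\beta$, $BV(\alpha)\cap BV(\beta)\subseteq\{\mu,\mu'\}\cup\mathrm{TVar}$, and each program binding at most one trace variable, its recorder. Formulas: $e_1\sim e_2$, $\neg,\wedge,\forall$, $[\alpha]\psi$, $\langle\alpha\rangle\psi$, $[\alpha]_{A,C}\psi$, $\langle\alpha\rangle_{A,C}\psi$; the ac-box $[\alpha]_{A,C}\psi$ is well-formed if $FV(A,C)\cap(BV(\alpha)\cup\{\mu,\mu'\})$ contains only trace variables. Semantics. Traces are finite sequences of events $\langle ch,a,d\rangle\in\mathbb N\times\mathbb R\times\mathbb R$; $\tau\downarrow Y$ deletes events with channel outside $Y$; a recorded trace $(h,\tau)$; $v\cdot(h,\tau)$ is the state $v$ with $v(h)$ replaced by $v(h)\cdot\tau$.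 $\tau\downarrow\gamma$ is projection onto the channels occurring in program $\gamma$. A program denotes a set $[\![\alpha]\!]$ of runs $(v,\tau,w)$, $v$ a state, $\tau$ a trace recorded by the program's recorder, $w$ a final state or $\bot$ (unfinished); for parallel composition, $[\![\alpha\parallel\beta]\!]=\{(v,\tau,w_\alpha\bowtie w_\beta):(v,\tau\downarrow\alpha,w_\alpha)\in[\![\alpha]\!],(v,\tau\downarrow\beta,w_\beta)\in[\![\beta]\!],w_\alpha=w_\beta\text{ on }\{\mu,\mu'\},\tau\downarrow(\alpha\parallel\beta)=\tau\}$, where $w_\alpha\bowtie w_\beta$ is $\bot$ if $w_\alpha=\bot$ or $w_\beta=\bot$, and otherwise equals $w_\alpha$ on $BV(\alpha)$ and $w_\beta$ elsewhere. (Other program constructs have the standard communicating-hybrid-program semantics: assignments, tests, ODEs, choice, prefix-closed sequential composition, iteration, and send/receive that append an event $\langle ch,\text{value},v(\mu)\rangle$.) $v\models\phi$ denotes satisfaction. Static semantics (formulas viewed as truth-valued). $FV(e)$: variables $z$ such that two states differing only on $z$ give $e$ different values. For $X\subseteq\mathrm{TVar}$, $v\downarrow_XY$ replaces $v(h)$ by $v(h)\downarrow Y$ for $h\in X$; $CN_X(e)$: channels $ch$ such that some $v,\tilde v$ with $v\downarrow_X(\mathbb N\setminus\{ch\})=\tilde v\downarrow_X(\mathbb N\setminus\{ch\})$ give $e$ different values. $BV(\alpha)$: variables $z$ with $(w\cdot\tau)(z)\ne v(z)$ for some $(v,\tau,w)\in[\![\alpha]\!]$, $w\ne\bot$. $CN(\alpha)$: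 channels $ch$ with $\tau\downarrow\{ch\}\ne\epsilon$ for some run of $\alpha$. *)

(* Defs.v *)
From Stdlib Require Import Reals List Arith.
Import ListNotations.
Open Scope R_scope.

Inductive rvar : Type := RBase (n : nat) | RDiff (n : nat).
Definition mu : rvar := RBase 0.
Definition mu' : rvar := RDiff 0.

Inductive var : Type := VR (x : rvar) | VT (h : nat).
Definition is_tvar (z : var) : Prop := match z with VT _ => True | VR _ => False end.

(** Events <ch, a, d> and traces. *)
Definition event : Type := (nat * R * R)%type.
Definition ev_ch (e : event) : nat := fst (fst e).
Definition trace : Type := list event.

Definition proj (tau : trace) (Y : nat -> bool) : trace :=
  filter (fun e => Y (ev_ch e)) tau.
Definition in_chans (L : list nat) (ch : nat) : bool := existsb (Nat.eqb ch) L.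
Definition proj_on (tau : trace) (L : list nat) : trace := proj tau (in_chans L).

Record state : Type := mkState { rst : rvar -> R ; tst : nat -> trace }.

Definition val_eq (v w : state) (z : var) : Prop :=
  match z with VR x => rst v x = rst w x | VT h => tst v h = tst w h end.
Definition state_eq (v w : state) : Prop :=
  (forall x, rst v x = rst w x) /\ (forall h, tst v h = tst w h).
Definition agree_except (v w : state) (z : var) : Prop :=
  forall z', z' <> z -> val_eq v w z'.

(** v . (h, tau) : v with v(h) replaced by v(h) . tau *)
Definition rec_app (v : state) (h : nat) (tau : trace) : state :=
  mkState (rst v) (fun h' => if Nat.eqb h' h then tst v h ++ tau else tst v h').
Definition rec_app_opt (v : state) (r : option nat) (tau : trace) : state :=
  match r with Some h => rec_app v h tau | None => v end.

Definition fml : Type := state -> Prop.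

Definition FV (phi : fml) (z : var) : Prop :=
  exists v vt, agree_except v vt z /\ ~ (phi v <-> phi vt).

Definition proj_state (X : nat -> bool) (Y : nat -> bool) (v : state) : state :=
  mkState (rst v) (fun h' => if X h' then proj (tst v h') Y else tst v h').

Definition CN_X (X : nat -> bool) (phi : fml) (ch : nat) : Prop :=
  exists v vt,
    state_eq (proj_state X (fun c => negb (Nat.eqb c ch)) v)
             (proj_state X (fun c => negb (Nat.eqb c ch)) vt)
    /\ ~ (phi v <-> phi vt).

(** Programs, given by their run semantics [[alpha]] (runs (v, tau, w), w = None
    meaning "unfinished" (bottom)), the (finite) set of channels occurring in the
    program, and its recorder (the unique trace variable it binds, if any).
    The fields below are properties enjoyed by every communicating hybrid program. *)
Record program : Type := {
  runs : state -> trace -> option state -> Prop;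
  chans : list nat;
  recorder : option nat;
  chans_ok : forall v tau w e, runs v tau w -> In e tau -> In (ev_ch e) chans;
  recorder_none : forall v tau w, recorder = None -> runs v tau w -> tau = [];
  tvars_fixed : forall v tau w, runs v tau (Some w) -> forall h, tst w h = tst v h;
  bound_finite : forall v tau w, runs v tau (Some w) ->
     exists L : list rvar, forall x, ~ In x L -> rst w x = rst v x
}.

Definition BV (a : program) (z : var) : Prop :=
  exists v tau w, runs a v tau (Some w) /\ ~ val_eq (rec_app_opt w (recorder a) tau) v z.

Definition CN (a : program) (ch : nat) : Prop :=
  exists v tau w, runs a v tau w /\ proj tau (fun c => Nat.eqb c ch) <> [].

Definition par_chans (a b : program) : list nat := chans a ++ chans b.

Definition is_join (a : program) (wa wb w : option state) : Prop :=
  match wa, wb with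
  | Some sa, Some sb =>
      exists s, w = Some s /\ (forall z, BV a z -> val_eq s sa z)
                /\ (forall z, ~ BV a z -> val_eq s sb z)
  | _, _ => w = None
  end.

Definition par_program (a b : program) (h : nat) : Prop :=
  (forall z, BV a z -> BV b z -> z = VR mu \/ z = VR mu' \/ is_tvar z)
  /\ (recorder a = Some h \/ recorder b = Some h)
  /\ (recorder a = None \/ recorder a = Some h)
  /\ (recorder b = None \/ recorder b = Some h).

Definition wf_acbox (a : program) (A C : fml) : Prop :=
  forall z, (FV A z \/ FV C z) -> (BV a z \/ z = VR mu \/ z = VR mu') -> is_tvar z.

Definition noninterf_one (a b : program) (h : nat) (chi : fml) : Prop :=
  (forall z, FV chi z -> BV b z -> z = VR mu \/ z = VR mu' \/ z = VT h)
  /\ (forall ch, CN_X (fun h' => Nat.eqb h' h) chi ch -> CN b ch -> CN a ch).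

Definition noninterf (a b : program) (h : nat) (A C psi : fml) : Prop :=
  noninterf_one a b h A /\ noninterf_one a b h C /\ noninterf_one a b h psi.

(* Main.v *)
Require Import Defs.
From Stdlib Require Import Reals List Classical FunctionalExtensionality Bool Arith.
Import ListNotations.

Lemma rvar_eq_dec (x y : rvar) : {x = y} + {x <> y}.
Proof. decide equality; apply Nat.eq_dec. Qed.

Definition upd (f : rvar -> R) x y := fun z => if rvar_eq_dec z x then y else f z.

Lemma real_change (phi : fml) (L : list rvar) : forall (u : state) (f : rvar -> R),
  (forall x, ~ In x L -> f x = rst u x) ->
  (forall x, f x <> rst u x -> ~ FV phi (VR x)) ->
  (phi u <-> phi (mkState f (tst u))).
Proof.
  induction L as [|x L IH]; intros u f H1 H2.
  - assert (f = rst u) by (apply functional_extensionality; intro; apply H1; simpl; tauto).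
    subst f. destruct u; simpl; tauto.
  - set (u' := mkState (upd (rst u) x (f x)) (tst u)).
    assert (Hs : phi u <-> phi u').
    { destruct (classic (f x = rst u x)) as [E|E].
      + assert (Eq : u' = u); [|rewrite Eq; tauto].
        unfold u'; destruct u; simpl. f_equal. apply functional_extensionality; intro y.
        unfold upd; destruct (rvar_eq_dec y x); subst; simpl in *; auto.
      + apply H2 in E. apply NNPP; intro N; apply E.
        exists u, u'; split; auto.
        intros [y|k] Hz; simpl; auto.
        unfold upd; destruct (rvar_eq_dec y x); subst; auto. congruence. }
    rewrite Hs. apply (IH u' f).
    + intros y Hy; simpl; unfold upd; destruct (rvar_eq_dec y x); subst; auto.
      apply H1; simpl; intros [E|E]; [congruence|tauto].
    + intros y; simpl; unfold upd; destruct (rvar_eq_dec y x); subst; auto.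
Qed.

Lemma proj_proj t P Q : proj (proj t P) Q = proj t (fun x => P x && Q x).
Proof.
  unfold proj; induction t as [|a t IH]; simpl; auto.
  destruct (P (ev_ch a)); simpl; destruct (Q (ev_ch a)); simpl; rewrite ?IH; auto.
Qed.

Lemma proj_app a b P : proj (a ++ b) P = proj a P ++ proj b P.
Proof. unfold proj; apply filter_app. Qed.

Lemma proj_idem t P : proj (proj t P) P = proj t P.
Proof.
  rewrite proj_proj. unfold proj; apply filter_ext; intro; destruct (P _); auto.
Qed.

Lemma trace_change (phi : fml) h (L : list nat) : forall u t,
  (forall c, In c L -> ~ CN_X (fun h' => Nat.eqb h' h) phi c) ->
  (phi (rec_app u h t) <-> phi (rec_app u h (proj t (fun c => negb (in_chans L c))))).
Proof.
  induction L as [|c L IH]; intros u t H.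
  - assert (proj t (fun c => negb (in_chans [] c)) = t) as ->; [|tauto].
    unfold proj; simpl. induction t; simpl; congruence.
  - assert (Hs : phi (rec_app u h t) <->
                 phi (rec_app u h (proj t (fun d => negb (Nat.eqb d c))))).
    { assert (Hn := H c (or_introl eq_refl)).
      apply NNPP; intro N; apply Hn.
      exists (rec_app u h t), (rec_app u h (proj t (fun d => negb (Nat.eqb d c)))).
      split; auto. split; intros; simpl; auto.
      destruct (Nat.eqb h0 h); auto.
      rewrite !proj_app, proj_idem; auto. }
    rewrite Hs, IH.
    + rewrite proj_proj. assert (Ef : proj t (fun x => negb (x =? c) && negb (in_chans L x)) = proj t (fun c0 => negb (in_chans (c :: L) c0))); [|rewrite Ef; tauto].
      unfold proj; apply filter_ext; intro e.
      unfold in_chans; simpl. rewrite (Nat.eqb_sym (ev_ch e) c); destruct (Nat.eqb c (ev_ch e)); auto.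
    + intros; apply H; simpl; auto.
Qed.

Lemma in_chans_iff L c : in_chans L c = true <-> In c L.
Proof.
  unfold in_chans; rewrite existsb_exists; split.
  - intros [x [Hx E]]; apply Nat.eqb_eq in E; subst; auto.
  - intros; exists c; split; auto; apply Nat.eqb_refl.
Qed.

Definition extra (tau : trace) (a : program) : list nat :=
  filter (fun c => negb (in_chans (chans a) c)) (map ev_ch tau).

Lemma proj_on_extra tau a :
  proj_on tau (chans a) = proj tau (fun c => negb (in_chans (extra tau a) c)).
Proof.
  unfold proj_on, proj; apply filter_ext_in; intros e He.
  destruct (in_chans (chans a) (ev_ch e)) eqn:E.
  - destruct (in_chans (extra tau a) (ev_ch e)) eqn:E2; auto.
    apply in_chans_iff in E2; unfold extra in E2; apply filter_In in E2.
    rewrite E in E2; destruct E2; discriminate.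
  - assert (in_chans (extra tau a) (ev_ch e) = true) as ->; auto.
    apply in_chans_iff; unfold extra; apply filter_In; split.
    + apply in_map; auto.
    + rewrite E; auto.
Qed.

Lemma extra_ok (alpha beta : program) h (phi : fml) v tau wb :
  noninterf_one alpha beta h phi ->
  runs beta v (proj_on tau (chans beta)) wb ->
  proj_on tau (par_chans alpha beta) = tau ->
  forall c, In c (extra tau alpha) -> ~ CN_X (fun h' => Nat.eqb h' h) phi c.
Proof.
  intros [_ Hn] Hb Ht c Hc HX.
  unfold extra in Hc; apply filter_In in Hc; destruct Hc as [Hm Hna].
  apply in_map_iff in Hm; destruct Hm as [e [<- He]].
  assert (Hna' : ~ In (ev_ch e) (chans alpha)).
  { intro I; apply in_chans_iff in I; rewrite I in Hna; discriminate. }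
  assert (Hb' : In (ev_ch e) (chans beta)).
  { rewrite <- Ht in He. unfold proj_on, proj in He; apply filter_In in He.
    destruct He as [_ He]; apply in_chans_iff in He; unfold par_chans in He.
    apply in_app_or in He; tauto. }
  assert (CN beta (ev_ch e)).
  { exists v, (proj_on tau (chans beta)), wb; split; auto.
    intro N. assert (In e (proj (proj_on tau (chans beta)) (fun c => Nat.eqb c (ev_ch e)))).
    { unfold proj at 1; apply filter_In; split.
      - unfold proj_on, proj; apply filter_In; split; auto. apply in_chans_iff; auto.
      - apply Nat.eqb_refl. }
    rewrite N in H; inversion H. }
  destruct (Hn _ HX H) as [v' [t' [w' [Hr Hp]]]].
  destruct (proj t' (fun c => Nat.eqb c (ev_ch e))) as [|e' l] eqn:Ep; [congruence|].
  assert (In e' (proj t' (fun c => Nat.eqb c (ev_ch e)))) by (rewrite Ep; left; auto).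
  unfold proj in H0; apply filter_In in H0; destruct H0 as [I E].
  apply Nat.eqb_eq in E. apply Hna'. rewrite <- E. eapply chans_ok; eauto.
Qed.

Lemma rst_rec_app_opt w r t : rst (rec_app_opt w r t) = rst w.
Proof. destruct r; auto. Qed.

Theorem lemmaA1 (alpha beta : program) (h : nat) (A C psi : fml)
  (v : state) (tau : trace) (wa wb w : option state) :
  wf_acbox alpha A C ->
  par_program alpha beta h ->
  noninterf alpha beta h A C psi ->
  runs alpha v (proj_on tau (chans alpha)) wa ->
  runs beta v (proj_on tau (chans beta)) wb ->
  is_join alpha wa wb w ->
  (forall s sa sb, w = Some s -> wa = Some sa -> wb = Some sb ->
     rst s mu = rst sa mu /\ rst sa mu = rst sb mu /\
     rst s mu' = rst sa mu' /\ rst sa mu' = rst sb mu') ->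
  proj_on tau (par_chans alpha beta) = tau ->
  (forall lam : fml, (lam = A \/ lam = C) ->
     (lam (rec_app v h (proj_on tau (chans alpha))) <-> lam (rec_app v h tau)))
  /\
  (forall s sa, w = Some s -> wa = Some sa ->
     (psi (rec_app sa h (proj_on tau (chans alpha))) <-> psi (rec_app s h tau))).
Proof.
  intros _ _ [NA [NC NP]] Ha Hb Hj Hmu Ht. split.
  - intros lam Hl. rewrite proj_on_extra. symmetry. apply trace_change.
    destruct Hl; subst; eapply extra_ok; eauto.
  - intros s sa -> ->.
    destruct wb as [sb|]; [|simpl in Hj; discriminate].
    destruct Hj as [s0 [E [HB HNB]]]. injection E as <-.
    destruct (Hmu s sa sb eq_refl eq_refl eq_refl) as [M1 [_ [M2 _]]].
    rewrite proj_on_extra, <- trace_change by (eapply extra_ok; eauto).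
    assert (Htst : forall k, tst s k = tst sa k).
    { intro k. rewrite (tvars_fixed _ _ _ _ Ha).
      destruct (classic (BV alpha (VT k))) as [B|B].
      - apply HB in B; simpl in B; rewrite B; exact (tvars_fixed _ _ _ _ Ha k).
      - apply HNB in B; simpl in B; rewrite B; exact (tvars_fixed _ _ _ _ Hb k). }
    assert (Hsa : forall x, ~ BV alpha (VR x) -> rst sa x = rst v x).
    { intros x B. apply NNPP; intro N; apply B.
      exists v, (proj_on tau (chans alpha)), sa; split; auto.
      simpl; rewrite rst_rec_app_opt; auto. }
    destruct (bound_finite _ _ _ _ Hb) as [L HL].
    assert (rec_app s h tau = mkState (rst s) (tst (rec_app sa h tau))) as ->.
    { unfold rec_app; simpl. f_equal. apply functional_extensionality; intro k.
      rewrite !Htst; auto. }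
    apply (real_change psi L (rec_app sa h tau) (rst s)).
    + intros x Hx; simpl.
      destruct (classic (BV alpha (VR x))) as [B|B].
      * apply HB in B; auto.
      * pose proof (HNB _ B) as E; simpl in E; rewrite E, HL, Hsa; auto.
    + intros x Hx; simpl in Hx. intro F.
      destruct (classic (BV alpha (VR x))) as [B|B].
      * apply HB in B; simpl in B; auto.
      * pose proof (HNB _ B) as E; simpl in E. rewrite Hsa in Hx by auto.
        assert (BV beta (VR x)).
        { exists v, (proj_on tau (chans beta)), sb; split; auto.
          simpl; rewrite rst_rec_app_opt; congruence. }
        destruct NP as [NP _]. destruct (NP _ F H) as [Q|[Q|Q]]; try discriminate;
        injection Q as ->; [apply Hx; rewrite <- Hsa, <- M1 by auto; auto|].
        apply Hx; rewrite <- Hsa, <- M2 by auto; auto.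
Qed.
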